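(* Let $L$ be a finite-dimensional Lie algebra over a field $F$. The relation ''is $L$-connected to'' is an equivalence relation on the set of chief factors of $L$.
   Context: A chief factor of $L$ is a quotient $A/B$ of ideals $B\subsetneq A$ with no ideal of $L$ strictly between them; two chief factors are $L$-isomorphic if they are isomorphic as $L$-modules. The core $U_L$ of a subalgebra is the largest ideal of $L$ contained in it; $L$ is primitive if it has a maximal subalgebra with zero core, and a primitive Lie algebra is of type 3 if it has precisely two distinct minimal ideals, both non-abelian. Two chief factors $A_1/B_1$, $A_2/B_2$ of $L$ are $L$-connected if either they are $L$-isomorphic, or there is an ideal $N$ of $L$ such that $L/N$ is primitive of type 3 and its two minimal ideals $E_1/N$, $E_2/N$ satisfy $E_1/N \cong_L A_1/B_1$ and $E_2/N \cong_L A_2/B_2$ (as $L$-modules). *)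

(* Defs.v *)
(* finite-dimensional Lie algebras over a field, encoded as a
   finite-dimensional vector space (vectType F) with a Lie bracket. *)
From HB Require Import structures.
From mathcomp Require Import all_boot all_order all_algebra.
Set Implicit Arguments. Unset Strict Implicit. Unset Printing Implicit Defensive.
Import GRing.Theory.
Local Open Scope ring_scope.


Section Lie.
Variables (F : fieldType) (L : vectType F) (br : L -> L -> L).

Definition lie_bracket : Prop :=
  [/\ (forall (a : F) (x y z : L), br (a *: x + y) z = a *: br x z + br y z),
      (forall (a : F) (x y z : L), br z (a *: x + y) = a *: br z x + br z y),
      (forall x : L, br x x = 0) &
      (forall x y z : L, br x (br y z) + br y (br z x) + br z (br x y) = 0)].

Definition is_ideal (I : {vspace L}) : Prop :=
  forall x y : L, y \in I -> br x y \in I.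

Definition is_subalg (S : {vspace L}) : Prop :=
  forall x y : L, x \in S -> y \in S -> br x y \in S.

Definition chief_factor (A B : {vspace L}) : Prop :=
  [/\ is_ideal A, is_ideal B, (B <= A)%VS, A != B &
      forall C, is_ideal C -> (B <= C)%VS -> (C <= A)%VS -> C = B \/ C = A].

(* A1/B1 and A2/B2 are isomorphic as L-modules (L acting by the bracket).
   Every linear map A1/B1 -> A2/B2 lifts to a linear endomorphism f of L;
   f induces a well-defined, injective, surjective, L-equivariant map. *)
Definition L_iso (A1 B1 A2 B2 : {vspace L}) : Prop :=
  exists f : 'End(L),
    [/\ (forall a, a \in A1 -> f a \in A2),
        (forall b, b \in B1 -> f b \in B2),
        (forall a, a \in A1 -> f a \in B2 -> a \in B1),
        (forall c, c \in A2 -> exists2 a, a \in A1 & c - f a \in B2) &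
        (forall x a, a \in A1 -> f (br x a) - br x (f a) \in B2)].

Definition is_core (U N : {vspace L}) : Prop :=
  [/\ is_ideal N, (N <= U)%VS &
      forall I, is_ideal I -> (I <= U)%VS -> (I <= N)%VS].

Definition max_subalg (M : {vspace L}) : Prop :=
  [/\ is_subalg M, M != fullv &
      forall S, is_subalg S -> (M <= S)%VS -> S = M \/ S = fullv].

(* E/N is a minimal ideal of L/N. *)
Definition minimal_over (N E : {vspace L}) : Prop :=
  [/\ is_ideal E, (N <= E)%VS, E != N &
      forall C, is_ideal C -> (N <= C)%VS -> (C <= E)%VS -> C = N \/ C = E].

Definition nonabelian_over (N E : {vspace L}) : Prop :=
  exists x y, [/\ x \in E, y \in E & br x y \notin N].

(* L/N is primitive of type 3 with minimal ideals E1/N, E2/N (via the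
   correspondence theorem, all expressed inside L):
   - L/N has a maximal subalgebra with zero core: a maximal subalgebra M of L
     containing N whose core in L is N;
   - L/N has precisely two distinct minimal ideals E1/N and E2/N;
   - both are non-abelian. *)
Definition primitive_type3 (N E1 E2 : {vspace L}) : Prop :=
  [/\ is_ideal N,
      (exists M, [/\ max_subalg M, (N <= M)%VS & is_core M N]),
      E1 != E2,
      minimal_over N E1 /\ minimal_over N E2 &
      (forall E, minimal_over N E -> E = E1 \/ E = E2)] /\
  (nonabelian_over N E1 /\ nonabelian_over N E2).

Definition L_connected (A1 B1 A2 B2 : {vspace L}) : Prop :=
  L_iso A1 B1 A2 B2 \/
  exists N E1 E2, [/\ primitive_type3 N E1 E2,
                      L_iso E1 N A1 B1 & L_iso E2 N A2 B2].

End Lie.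

(* Main.v *)
Require Import Defs.
From HB Require Import structures.
From mathcomp Require Import all_boot all_order all_algebra.
Set Implicit Arguments. Unset Strict Implicit. Unset Printing Implicit Defensive.
Import GRing.Theory.
Local Open Scope ring_scope.

Lemma br0l (F : fieldType) (L : vectType F) (br : L -> L -> L) (hL : lie_bracket br) z :
  br 0 z = 0.
Proof.
case: hL => Hl _ _ _; have h := Hl 1 0 0 z; rewrite !scale1r addr0 in h.
by apply: (addrI (br 0 z)); rewrite addr0 -h.
Qed.

Lemma br0r (F : fieldType) (L : vectType F) (br : L -> L -> L) (hL : lie_bracket br) z :
  br z 0 = 0.
Proof.
case: hL => _ Hr _ _; have h := Hr 1 0 0 z; rewrite !scale1r addr0 in h.
by apply: (addrI (br z 0)); rewrite addr0 -h.
Qed.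

Lemma brDl (F : fieldType) (L : vectType F) (br : L -> L -> L) (hL : lie_bracket br) x y z :
  br (x + y) z = br x z + br y z.
Proof. by case: hL => Hl _ _ _; have := Hl 1 x y z; rewrite !scale1r. Qed.

Lemma brDr (F : fieldType) (L : vectType F) (br : L -> L -> L) (hL : lie_bracket br) x y z :
  br z (x + y) = br z x + br z y.
Proof. by case: hL => _ Hr _ _; have := Hr 1 x y z; rewrite !scale1r. Qed.

Lemma brNl (F : fieldType) (L : vectType F) (br : L -> L -> L) (hL : lie_bracket br) x z :
  br (- x) z = - br x z.
Proof.
have h0 := br0l hL z; case: hL => Hl _ _ _.
by have := Hl (-1) x 0 z; rewrite h0 !addr0 !scaleN1r.
Qed.

Lemma brNr (F : fieldType) (L : vectType F) (br : L -> L -> L) (hL : lie_bracket br) x z :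
  br z (- x) = - br z x.
Proof.
have h0 := br0r hL z; case: hL => _ Hr _ _.
by have := Hr (-1) x 0 z; rewrite h0 !addr0 !scaleN1r.
Qed.

Lemma brBl (F : fieldType) (L : vectType F) (br : L -> L -> L) (hL : lie_bracket br) x y z :
  br (x - y) z = br x z - br y z.
Proof. by rewrite (brDl hL) (brNl hL). Qed.

Lemma brBr (F : fieldType) (L : vectType F) (br : L -> L -> L) (hL : lie_bracket br) x y z :
  br z (x - y) = br z x - br z y.
Proof. by rewrite (brDr hL) (brNr hL). Qed.

Lemma br_anti (F : fieldType) (L : vectType F) (br : L -> L -> L) (hL : lie_bracket br) x y :
  br x y = - br y x.
Proof.
have h : br (x + y) (x + y) = 0 by case: hL.
rewrite (brDl hL) !(brDr hL) in h.
have hx : br x x = 0 by case: hL.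
have hy : br y y = 0 by case: hL.
rewrite hx hy add0r addr0 in h.
by apply/eqP; rewrite -subr_eq0 opprK h.
Qed.

Lemma ideal_l (F : fieldType) (L : vectType F) (br : L -> L -> L) (hL : lie_bracket br)
  (I : {vspace L}) x y : is_ideal br I -> y \in I -> br y x \in I.
Proof. by move=> hI yI; rewrite (br_anti hL) memvN hI. Qed.
Lemma iso_refl (F : fieldType) (L : vectType F) (br : L -> L -> L) (A B : {vspace L}) :
  L_iso br A B A B.
Proof.
exists \1%VF; split.
- by move=> a; rewrite id_lfunE.
- by move=> a; rewrite id_lfunE.
- by move=> a _; rewrite id_lfunE.
- by move=> c cA; exists c; rewrite // id_lfunE subrr mem0v.
- by move=> x a _; rewrite !id_lfunE subrr mem0v.
Qed.

Lemma iso_trans (F : fieldType) (L : vectType F) (br : L -> L -> L) (A1 B1 A2 B2 A3 B3 : {vspace L}) :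
  L_iso br A1 B1 A2 B2 -> L_iso br A2 B2 A3 B3 -> L_iso br A1 B1 A3 B3.
Proof.
case=> f [f1 f2 f3 f4 f5] [g [g1 g2 g3 g4 g5]].
exists (g \o f)%VF; split.
- by move=> a aA; rewrite comp_lfunE; apply: g1; apply: f1.
- by move=> b bB; rewrite comp_lfunE; apply: g2; apply: f2.
- by move=> a aA; rewrite comp_lfunE => h; apply: f3 => //; apply: g3 => //; apply: f1.
- move=> c cA.
  have [a2 a2A h2] := g4 c cA; have [a1 a1A h1] := f4 a2 a2A.
  exists a1 => //; rewrite comp_lfunE.
  have -> : c - g (f a1) = (c - g a2) + g (a2 - f a1) by rewrite linearB /= addrA subrK.
  by rewrite memvD // g2.
- move=> x a aA; rewrite !comp_lfunE.
  have -> : g (f (br x a)) - br x (g (f a)) =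
     g (f (br x a) - br x (f a)) + (g (br x (f a)) - br x (g (f a))).
    by rewrite linearB /= addrA subrK.
  by rewrite memvD ?g2 ?f5 ?g5 ?f1.
Qed.


Lemma iso_sym (F : fieldType) (L : vectType F) (br : L -> L -> L) (hL : lie_bracket br)
  (A1 B1 A2 B2 : {vspace L}) :
  is_ideal br A1 -> is_ideal br A2 -> is_ideal br B2 ->
  L_iso br A1 B1 A2 B2 -> L_iso br A2 B2 A1 B1.
Proof.
move=> iA1 iA2 iB2 [f [f1 f2 f3 f4 f5]].
pose h := (f \o projv A1)%VF.
pose U := ((f @: A1) :\: B2)%VS.
pose pi := daddv_pi U B2.
pose g := (projv A1 \o h^-1 \o pi)%VF.
have UB : (U :&: B2 = 0)%VS by apply: capv_diff.
have BU : (B2 :&: U = 0)%VS by rewrite capvC.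
have limgh : limg h = (f @: A1)%VS by rewrite limg_comp limg_proj.
have Usub : (U <= f @: A1)%VS by apply: diffvSl.
have gA x : g x \in A1 by rewrite !comp_lfunE memv_proj.
have piB b : b \in B2 -> pi b = 0.
  move=> bB; have bUB : b \in (U + B2)%VS by rewrite (subvP (addvSr U B2)).
  have := daddv_pi_add UB bUB; rewrite (daddv_pi_id BU bB).
  by move/eqP; rewrite -subr_eq0 addrK => /eqP.
have gB b : b \in B2 -> g b = 0.
  by move=> bB; rewrite !comp_lfunE piB // !linear0.
have key c : c \in A2 -> f (g c) - c \in B2.
  move=> cA; have [a aA ha] := f4 c cA.
  have cUB : c \in (U + B2)%VS.
    rewrite /U addv_diff -[c](subrK (f a)) addrC; apply: memv_add.
    - by rewrite memv_img.
    - by [].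
  have hc := daddv_pi_add UB cUB.
  have piU : pi c \in U by apply: memv_pi.
  have -> : f (g c) = pi c.
    rewrite !comp_lfunE.
    have := limg_lfunVK (f := h) (x := pi c).
    rewrite limgh => /(_ (subvP Usub _ piU)).
    by rewrite comp_lfunE.
  by rewrite -{2}hc opprD addrA subrr add0r memvN memv_pi.
exists g; split.
- by move=> c _; apply: gA.
- by move=> b bB; rewrite gB // mem0v.
- move=> c cA gc; have := key c cA.
  move=> h1.
  by rewrite -[c](subrK (f (g c))) addrC -opprB memvB // f2.
- move=> a aA; exists (f a); first exact: f1.
  have := key (f a) (f1 a aA); rewrite -linearB /= => h1.
  by rewrite -memvN opprB; apply: f3 => //; rewrite memvB // gA.
- move=> x c cA.
  have k1 := key (br x c) (iA2 x c cA).
  have k2 := key c cA.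
  have k3 := f5 x (g c) (gA c).
  apply: f3; first by rewrite memvB // iA1.
  rewrite linearB /=.
  have -> : f (g (br x c)) - f (br x (g c)) =
    (f (g (br x c)) - br x c) + (br x c - br x (f (g c))) + (br x (f (g c)) - f (br x (g c))).
    by rewrite !addrA !subrK.
  have t2 : br x c - br x (f (g c)) \in B2 by rewrite -(brBr hL) -opprB (brNr hL) memvN iB2.
  have t3 : br x (f (g c)) - f (br x (g c)) \in B2 by rewrite -opprB memvN.
  by apply: memvD; first apply: memvD.
Qed.


Definition adr (F : fieldType) (L : vectType F) (br : L -> L -> L) (a : L) : 'End(L) :=
  linfun (fun x => br x a).
Definition adl (F : fieldType) (L : vectType F) (br : L -> L -> L) (a : L) : 'End(L) :=
  linfun (fun x => br a x).

Lemma adrE (F : fieldType) (L : vectType F) (br : L -> L -> L) (hL : lie_bracket br) a x :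
  adr br a x = br x a.
Proof.
pose f := fun x => br x a.
have lf : linear f by move=> k u v; rewrite /f; case: hL => Hl _ _ _; apply: Hl.
pose g : {linear L -> L} := HB.pack f (GRing.isLinear.Build F L L *:%R f lf).
exact: (lfunE g x).
Qed.

Lemma adlE (F : fieldType) (L : vectType F) (br : L -> L -> L) (hL : lie_bracket br) a x :
  adl br a x = br a x.
Proof.
pose f := fun x => br a x.
have lf : linear f by move=> k u v; rewrite /f; case: hL => _ Hr _ _; apply: Hr.
pose g : {linear L -> L} := HB.pack f (GRing.isLinear.Build F L L *:%R f lf).
exact: (lfunE g x).
Qed.

Definition centv (F : fieldType) (L : vectType F) (br : L -> L -> L) (A N : {vspace L}) :
  {vspace L} :=
  (\bigcap_(i < \dim A) (adr br (vbasis A)`_i @^-1: N))%VS.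

Lemma memv_centv (F : fieldType) (L : vectType F) (br : L -> L -> L) (hL : lie_bracket br)
  (A N : {vspace L}) x :
  reflect (forall a, a \in A -> br x a \in N) (x \in centv br A N).
Proof.
rewrite memvE; apply: (iffP subv_bigcapP) => [h a aA | h i _].
  rewrite (coord_vbasis aA) -(adlE hL) linear_sum /=.
  apply: memv_suml => i _; rewrite linearZ /= memvZ //.
  have := h i isT; rewrite -memvE -memv_preim adrE //.
  by rewrite (adlE hL).
rewrite -memvE -memv_preim (adrE hL) h //.
by apply: vbasis_mem; apply: mem_nth; rewrite size_tuple.
Qed.


Lemma t3_F1 (F : fieldType) (L : vectType F) (br : L -> L -> L) (hL : lie_bracket br)
  (N E1 M : {vspace L}) :
  minimal_over br N E1 -> max_subalg br M -> is_core br M N ->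
  forall x, exists2 m, m \in M & exists2 e, e \in E1 & x = m + e.
Proof.
case=> iE NE ENe _ [sM Mf maxM] [iN NM coreM] x.
have hM' z : z \in M -> z \in (M + E1)%VS by apply: (subvP (addvSl _ _)).
have hE' z : z \in E1 -> z \in (M + E1)%VS by apply: (subvP (addvSr _ _)).
have sS : is_subalg br (M + E1)%VS.
  move=> u v /memv_addP[m1 m1M [e1 e1E ->]] /memv_addP[m2 m2M [e2 e2E ->]].
  rewrite (brDl hL) !(brDr hL).
  repeat apply: memvD.
  - by apply: (hM'); apply: (sM).
  - by apply: (hE'); apply: (iE).
  - by apply: (hE'); apply: (ideal_l hL).
  - by apply: (hE'); apply: (iE).
case: (maxM _ sS (addvSl _ _)) => [hS | hS].
  have EM : (E1 <= M)%VS by rewrite -hS addvSr.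
  have EN := coreM E1 iE EM.
  by move: ENe; rewrite eqEsubv EN NE.
by apply/memv_addP; rewrite hS memvf.
Qed.

Lemma t3_F0 (F : fieldType) (L : vectType F) (br : L -> L -> L)
  (N E1 E2 : {vspace L}) :
  minimal_over br N E1 -> minimal_over br N E2 -> E1 != E2 ->
  (E1 :&: E2)%VS = N.
Proof.
move=> [iE1 NE1 E1N min1] [iE2 NE2 E2N min2] E12.
have iC : is_ideal br (E1 :&: E2)%VS.
  by move=> x y /memv_capP[h1 h2]; rewrite memv_cap iE1 ?iE2.
case: (min1 _ iC _ (capvSl _ _)) => //; first by rewrite subv_cap NE1.
move=> hC.
have sE : (E1 <= E2)%VS by rewrite -hC capvSr.
case: (min2 _ iE1 NE1 sE) => h; first by rewrite h eqxx in E1N.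
by rewrite h eqxx in E12.
Qed.

Lemma t3_F2 (F : fieldType) (L : vectType F) (br : L -> L -> L) (hL : lie_bracket br)
  (N E1 E2 M : {vspace L}) :
  minimal_over br N E1 -> minimal_over br N E2 -> E1 != E2 ->
  max_subalg br M -> is_core br M N ->
  forall y, y \in M -> y \in E1 -> y \in N.
Proof.
move=> m1 m2 E12 hM hc.
have F0 := t3_F0 m1 m2 E12.
have F1 := t3_F1 hL m2 hM hc.
case: m1 => iE1 NE1 _ _; case: m2 => iE2 NE2 _ _.
case: hM => sM _ _; case: hc => iN NM coreM.
have iI : is_ideal br (M :&: E1)%VS.
  move=> z y /memv_capP[yM yE].
  have [m mM [e eE ->]] := F1 z.
  rewrite (brDl hL); apply: memvD; first by rewrite memv_cap sM // iE1.
  have h : br e y \in N by rewrite -F0 memv_cap iE1 // (ideal_l hL).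
  by rewrite memv_cap (subvP NM) // (subvP NE1).
move=> y yM yE; apply: (subvP (coreM _ iI (capvSl _ _))).
by rewrite memv_cap yM.
Qed.

Lemma t3_F3 (F : fieldType) (L : vectType F) (br : L -> L -> L) (hL : lie_bracket br)
  (N E1 E2 M : {vspace L}) :
  minimal_over br N E1 -> minimal_over br N E2 -> E1 != E2 ->
  max_subalg br M -> is_core br M N ->
  forall x, (forall a, a \in E1 -> br x a \in N) -> x \in E2.
Proof.
move=> m1 m2 E12 hM hc.
have F0 := t3_F0 m1 m2 E12.
have F1 := t3_F1 hL m1 hM hc.
have F1' := t3_F1 hL m2 hM hc.
case: m1 => iE1 NE1 _ _; case: m2 => iE2 NE2 _ _.
case: hM => sM _ _; case: hc => iN NM coreM.
have iI : is_ideal br (M :&: centv br E1 N)%VS.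
  move=> z y /memv_capP[yM /(memv_centv hL) yC].
  have [m mM [e eE ->]] := F1 z.
  rewrite (brDl hL); apply: memvD.
    rewrite memv_cap sM //; apply/(memv_centv hL) => a aE.
    have hj : br m (br y a) + br y (br a m) + br a (br m y) = 0 by case: hL.
    rewrite (br_anti hL); move/eqP: hj; rewrite addrC addr_eq0 => /eqP ->.
    rewrite opprK memvD //; first by apply: iN; apply: yC.
    by apply: yC; apply: (ideal_l hL).
  have h : br e y \in N by rewrite (br_anti hL) memvN yC.
  rewrite memv_cap (subvP NM) //; apply/(memv_centv hL) => a aE.
  by rewrite (ideal_l hL).
move=> x xC.
have [m mM [e eE ex]] := F1' x.
have mN : m \in N.
  apply: (subvP (coreM _ iI (capvSl _ _))).
  rewrite memv_cap mM; apply/(memv_centv hL) => a aE.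
  have -> : m = x - e by rewrite ex addrK.
  rewrite (brBl hL) memvB ?xC //.
  by rewrite -F0 memv_cap; apply/andP; split; [apply: iE1 | apply: (ideal_l hL)].
by rewrite ex memvD // (subvP NE2).
Qed.


Lemma only_two (F : fieldType) (L : vectType F) (br : L -> L -> L) (hL : lie_bracket br)
  (N E1 E2 E : {vspace L}) :
  minimal_over br N E1 -> minimal_over br N E2 ->
  (forall x, (forall a, a \in E1 -> br x a \in N) -> x \in E2) ->
  minimal_over br N E -> E = E1 \/ E = E2.
Proof.
move=> m1 m2 C1 [iE NE EN minE].
have step (E' : {vspace L}) : minimal_over br N E' ->
    (E :&: E')%VS = N \/ E = E'.
  case=> iE' NE' E'N min'.
  have iC : is_ideal br (E :&: E')%VS.
    by move=> x y /memv_capP[h1 h2]; rewrite memv_cap iE ?iE'.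
  have NC : (N <= E :&: E')%VS by rewrite subv_cap NE NE'.
  case: (minE _ iC NC (capvSl _ _)) => hC; first by left.
  right; have sE : (E <= E')%VS by rewrite -hC capvSr.
  by case: (min' _ iE NE sE) => // h; rewrite h eqxx in EN.
case: (step _ m1) => [h1|]; last by left.
case: (step _ m2) => [h2|]; last by right.
have : (E <= N)%VS.
  apply/subvP => x xE; rewrite -h2 memv_cap xE C1 // => a aE.
  have iE1 : is_ideal br E1 by case: m1.
  by rewrite -h1 memv_cap iE1 // andbT; exact: (ideal_l hL _ iE xE).
move=> EsN; by move: EN; rewrite eqEsubv EsN NE.
Qed.

Lemma build_t3 (F : fieldType) (L : vectType F) (br : L -> L -> L) (hL : lie_bracket br)
  (N E1 E2 M : {vspace L}) :
  is_ideal br N -> minimal_over br N E1 -> minimal_over br N E2 ->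
  (E1 :&: E2)%VS = N -> is_subalg br M -> (N <= M)%VS ->
  (forall x, exists2 m, m \in M & exists2 e, e \in E1 & x = m + e) ->
  (forall x, exists2 m, m \in M & exists2 e, e \in E2 & x = m + e) ->
  (forall y, y \in M -> y \in E1 -> y \in N) ->
  (forall y, y \in M -> y \in E2 -> y \in N) ->
  (forall x, (forall a, a \in E1 -> br x a \in N) -> x \in E2) ->
  (forall x, (forall a, a \in E2 -> br x a \in N) -> x \in E1) ->
  nonabelian_over br N E1 -> nonabelian_over br N E2 ->
  primitive_type3 br N E1 E2.
Proof.
move=> iN m1 m2 cap sM NM D1 D2 I1 I2 C1 C2 na1 na2.
have [iE1 NE1 E1N min1] := m1.
have [iE2 NE2 E2N min2] := m2.
split; [split | by split].
- exact: iN.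
- exists M; split => //; last first.
    split => // I iI IM; apply/subvP => x xI.
    have xM := subvP IM x xI.
    apply: I2 => //; apply: C1 => a aE.
    apply: I1; last exact: iE1.
    by apply: (subvP IM); exact: (ideal_l hL _ iI xI).
  split => //.
    apply/eqP => hMf; move: E1N; rewrite eqEsubv NE1 andbT.
    by move/negP; apply; apply/subvP => y yE; apply: I1; rewrite // hMf memvf.
  move=> S sS MS.
  have iC : is_ideal br (S :&: E1)%VS.
    move=> z y /memv_capP[yS yE].
    have [m mM [e eE ->]] := D2 z.
    rewrite (brDl hL); apply: memvD.
      by rewrite memv_cap iE1 // sS // (subvP MS).
    have h : br e y \in N by rewrite -cap memv_cap iE1 // (ideal_l hL).
    by rewrite memv_cap (subvP MS) ?(subvP NM) // (subvP NE1).
  have NC : (N <= S :&: E1)%VS by rewrite subv_cap NE1 (subv_trans NM MS).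
  case: (min1 _ iC NC (capvSr _ _)) => hC.
    left; apply/eqP; rewrite eqEsubv MS andbT; apply/subvP => s sS'.
    have [m mM [e eE se]] := D1 s.
    have eN : e \in N.
      rewrite -hC memv_cap eE andbT.
      have -> : e = s - m by rewrite se addrC addKr.
      by rewrite memvB // (subvP MS).
    by rewrite se memvD // (subvP NM).
  right; apply/eqP; rewrite eqEsubv subvf /=; apply/subvP => s _.
  have [m mM [e eE ->]] := D1 s.
  apply: memvD; first exact: (subvP MS).
  by move: eE; rewrite -{1}hC => /memv_capP[].
- by apply/eqP => h; move: E1N; rewrite -{1}cap h capvv eqxx.
- by split.
- by move=> E hE; exact: (only_two hL m1 m2 C1 hE).
Qed.


Lemma iso_cent_fw (F : fieldType) (L : vectType F) (br : L -> L -> L) (hL : lie_bracket br)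
  (A1 B1 A2 B2 : {vspace L}) x :
  L_iso br A1 B1 A2 B2 -> is_ideal br B2 ->
  (forall a, a \in A1 -> br x a \in B1) -> forall c, c \in A2 -> br x c \in B2.
Proof.
move=> [f [f1 f2 f3 f4 f5]] iB2 h c cA.
have [a aA ha] := f4 c cA.
have -> : br x c = br x (c - f a) - (f (br x a) - br x (f a)) + f (br x a).
  by rewrite (brBr hL) opprB !addrA subrK subrK.
apply: memvD; last exact: f2 _ (h a aA).
by apply: memvB; [exact: iB2 | exact: f5].
Qed.

Lemma iso_cent_bw (F : fieldType) (L : vectType F) (br : L -> L -> L) (hL : lie_bracket br)
  (A1 B1 A2 B2 : {vspace L}) x :
  L_iso br A1 B1 A2 B2 -> is_ideal br A1 ->
  (forall c, c \in A2 -> br x c \in B2) -> forall a, a \in A1 -> br x a \in B1.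
Proof.
move=> [f [f1 f2 f3 f4 f5]] iA1 h a aA.
apply: f3; first exact: iA1.
have -> : f (br x a) = (f (br x a) - br x (f a)) + br x (f a) by rewrite subrK.
by apply: memvD; [exact: f5 | exact: h (f1 a aA)].
Qed.

Lemma iso_second (F : fieldType) (L : vectType F) (br : L -> L -> L)
  (A B C : {vspace L}) :
  (C <= A)%VS -> (A <= B + C)%VS -> L_iso br C (B :&: C) A B.
Proof.
move=> CA ABC; exists \1%VF; split.
- by move=> c cC; rewrite id_lfunE (subvP CA).
- by move=> b /memv_capP[bB _]; rewrite id_lfunE.
- by move=> c cC; rewrite id_lfunE => cB; rewrite memv_cap cB.
- move=> a aA; have /memv_addP[b bB [c cC ->]] := subvP ABC a aA.
  by exists c; rewrite // id_lfunE addrK.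
- by move=> x a _; rewrite !id_lfunE subrr mem0v.
Qed.


Lemma case4 (F : fieldType) (L : vectType F) (br : L -> L -> L) (hL : lie_bracket br)
  (A1 B1 A2 B2 A3 B3 N E1 E2 N' E1' E2' : {vspace L}) :
  is_ideal br A1 -> is_ideal br B1 -> is_ideal br A2 -> is_ideal br B2 ->
  primitive_type3 br N E1 E2 -> L_iso br E1 N A1 B1 -> L_iso br E2 N A2 B2 ->
  primitive_type3 br N' E1' E2' -> L_iso br E1' N' A2 B2 -> L_iso br E2' N' A3 B3 ->
  L_connected br A1 B1 A3 B3.
Proof.
move=> iA1 iB1 iA2 iB2 [[iN [M [hM NM hc]] E12 [m1 m2] _] [na1 na2]] i1 i2.
move=> [[iN' [M' [hM' NM' hc']] E12' [m1' m2'] _] [na1' na2']] i1' i2'.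
have E21 : E2 != E1 by rewrite eq_sym.
have E21' : E2' != E1' by rewrite eq_sym.
have F0 := t3_F0 m1 m2 E12.
have F0' := t3_F0 m1' m2' E12'.
have D1 := t3_F1 hL m1 hM hc.
have D2 := t3_F1 hL m2 hM hc.
have D1' := t3_F1 hL m1' hM' hc'.
have D2' := t3_F1 hL m2' hM' hc'.
have I1 := t3_F2 hL m1 m2 E12 hM hc.
have I2 := t3_F2 hL m2 m1 E21 hM hc.
have I1' := t3_F2 hL m1' m2' E12' hM' hc'.
have I2' := t3_F2 hL m2' m1' E21' hM' hc'.
have C12 := t3_F3 hL m1 m2 E12 hM hc.
have C21 := t3_F3 hL m2 m1 E21 hM hc.
have C12' := t3_F3 hL m1' m2' E12' hM' hc'.
have C21' := t3_F3 hL m2' m1' E21' hM' hc'.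
have [iE1 NE1 E1N min1] := m1.
have [iE2 NE2 E2N min2] := m2.
have [iE1' NE1' E1N' min1'] := m1'.
have [iE2' NE2' E2N' min2'] := m2'.
have iso22 : L_iso br E2 N E1' N' by apply: iso_trans i2 (iso_sym hL iE1' iA2 iB2 i1').
have eE : E2' = E1.
  apply/vspaceP => x; apply/idP/idP => xE.
    apply: C21 => a aE; apply: (iso_cent_bw hL iso22 iE2) => // c cE.
    by rewrite -F0' memv_cap iE1' // (ideal_l hL).
  apply: C12'; apply: (iso_cent_fw hL iso22 iN') => a aE.
  by rewrite -F0 memv_cap iE2 // (ideal_l hL).
subst E2'.
case: (eqVneq N N') => [eN | nN].
  left; apply: (iso_trans (iso_sym hL iE1 iA1 iB1 i1)); rewrite eN; exact: i2'.
have nsub' : ~ (N' <= N)%VS.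
  move=> h; case: (min2' _ iN h NE1) => h'; first by rewrite h' eqxx in nN.
  by rewrite h' eqxx in E1N.
have nsub : ~ (N <= N')%VS.
  move=> h; case: (min1 _ iN' h NE2') => h'; first by rewrite h' eqxx in nN.
  by rewrite h' eqxx in E2N'.
have ED : forall x, x \in E1 -> exists2 n, n \in N & exists2 p, p \in N' & x = n + p.
  have iS : is_ideal br (N + N')%VS.
    move=> x y /memv_addP[n nN' [p pN ->]].
    by rewrite (brDr hL) memv_add // ?iN ?iN'.
  have NS : (N + N' <= E1)%VS by rewrite subv_add NE1 NE2'.
  case: (min1 _ iS (addvSl _ _) NS) => hS.
    by exfalso; apply: nsub'; rewrite -hS addvSr.
  by move=> x; rewrite -hS => /memv_addP.
have capA y : y \in N' -> y \in E2 -> y \in N.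
  by move=> yN yE; rewrite -F0 memv_cap yE (subvP NE2').
have capB y : y \in N -> y \in E1' -> y \in N'.
  by move=> yN yE; rewrite -F0' memv_cap yE (subvP NE1).
pose N'' := (E2 :&: E1')%VS.
have iN'' : is_ideal br N'' by move=> x y /memv_capP[h1 h2]; rewrite memv_cap iE2 ?iE1'.
have E1'D : forall x, x \in E1' -> exists2 p, p \in N' & exists2 q, q \in N'' & x = p + q.
  pose J := (E1' :&: (N' + E2))%VS.
  have iJ : is_ideal br J.
    move=> x y /memv_capP[h1 /memv_addP[p pN [q qE hy]]].
    by rewrite /J memv_cap iE1' //= hy (brDr hL) memv_add ?iN' ?iE2.
  have NJ : (N' <= J)%VS by rewrite subv_cap NE1' addvSl.
  case: (min1' _ iJ NJ (capvSl _ _)) => hJ.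
    exfalso; move: E1N'; rewrite eqEsubv NE1' andbT => /negP; apply.
    apply/subvP => x xE.
    have xE1 : x \in E1.
      apply: C21 => a aE.
      have h : br x a \in J by rewrite memv_cap (ideal_l hL) // (subvP (addvSr _ _)) // iE2.
      by rewrite -F0 memv_cap iE2 // andbT (subvP NE2') // -hJ.
    by rewrite -F0' memv_cap xE xE1.
  move=> x xE; have : x \in J by rewrite hJ.
  move=> /memv_capP[_ /memv_addP[p pN [q qE xpq]]].
  exists p => //; exists q => //.
  rewrite memv_cap qE /=.
  have -> : q = x - p by rewrite xpq addrC addKr.
  by rewrite memvB // (subvP NE1').
have E2D : forall x, x \in E2 -> exists2 n, n \in N & exists2 q, q \in N'' & x = n + q.
  pose J := (E2 :&: (N + E1'))%VS.
  have iJ : is_ideal br J.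
    move=> x y /memv_capP[h1 /memv_addP[p pN [q qE hy]]].
    by rewrite /J memv_cap iE2 //= hy (brDr hL) memv_add ?iN ?iE1'.
  have NJ : (N <= J)%VS by rewrite subv_cap NE2 addvSl.
  case: (min2 _ iJ NJ (capvSl _ _)) => hJ.
    exfalso; move: E2N; rewrite eqEsubv NE2 andbT => /negP; apply.
    apply/subvP => x xE.
    have xE1 : x \in E1.
      apply: C12' => a aE.
      have h : br x a \in J by rewrite memv_cap (ideal_l hL) // (subvP (addvSr _ _)) // iE1'.
      by rewrite -F0' memv_cap iE1' // (subvP NE1) // -hJ.
    by rewrite -F0 memv_cap xE xE1.
  move=> x xE; have : x \in J by rewrite hJ.
  move=> /memv_capP[_ /memv_addP[p pN [q qE xpq]]].
  exists p => //; exists q => //.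
  rewrite memv_cap qE andbT.
  have -> : q = x - p by rewrite xpq addrC addKr.
  by rewrite memvB // (subvP NE2).
have mo1 : minimal_over br N'' E1'.
  split => //; first exact: capvSr.
    apply/eqP => h; apply: nsub'; apply/subvP => y yN.
    have : y \in N'' by rewrite -h (subvP NE1').
    by move=> /memv_capP[yE _]; apply: capA.
  move=> C iC NC CE.
  pose K := ((C :&: E1) + N)%VS.
  have iK : is_ideal br K.
    move=> x y /memv_addP[c /memv_capP[cC cE] [n0 n0N ->]].
    by rewrite (brDr hL) memv_add ?memv_cap ?iC ?iE1 ?iN.
  have KE : (K <= E1)%VS by rewrite subv_add capvSr NE1.
  case: (min1 _ iK (addvSr _ _) KE) => hK.
    left; apply/eqP; rewrite eqEsubv NC andbT; apply/subvP => x xC.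
    rewrite /N'' memv_cap (subvP CE) // andbT.
    apply: C12 => a aE; rewrite -hK; apply: (subvP (addvSl _ _)).
    by rewrite memv_cap iE1 // andbT (ideal_l hL).
  right; apply/eqP; rewrite eqEsubv CE /=; apply/subvP => x xE.
  have [p pN [q qN ->]] := E1'D x xE.
  apply: memvD; last exact: (subvP NC).
  have : p \in K by rewrite hK (subvP NE2').
  move=> /memv_addP[c /memv_capP[cC cE] [n nN0 pcn]].
  have nN'' : n \in N''.
    rewrite /N'' memv_cap (subvP NE2) //=.
    have -> : n = p - c by rewrite pcn addrC addKr.
    by apply: memvB; [exact: (subvP NE1') | exact: (subvP CE)].
  by rewrite pcn memvD // (subvP NC).
have mo2 : minimal_over br N'' E2.
  split => //; first exact: capvSl.
    apply/eqP => h; apply: nsub; apply/subvP => y yN.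
    have : y \in N'' by rewrite -h (subvP NE2).
    by move=> /memv_capP[_ yE]; apply: capB.
  move=> C iC NC CE.
  pose K := ((C :&: E1) + N')%VS.
  have iK : is_ideal br K.
    move=> x y /memv_addP[c /memv_capP[cC cE] [n0 n0N ->]].
    by rewrite (brDr hL) memv_add ?memv_cap ?iC ?iE1 ?iN'.
  have KE : (K <= E1)%VS by rewrite subv_add capvSr NE2'.
  case: (min2' _ iK (addvSr _ _) KE) => hK.
    left; apply/eqP; rewrite eqEsubv NC andbT; apply/subvP => x xC.
    rewrite /N'' memv_cap (subvP CE) //=.
    apply: C21' => a aE; rewrite -hK; apply: (subvP (addvSl _ _)).
    by rewrite memv_cap iE1 // andbT (ideal_l hL).
  right; apply/eqP; rewrite eqEsubv CE /=; apply/subvP => x xE.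
  have [p pN [q qN ->]] := E2D x xE.
  apply: memvD; last exact: (subvP NC).
  have : p \in K by rewrite hK (subvP NE1).
  move=> /memv_addP[c /memv_capP[cC cE] [n nN0 pcn]].
  have nN'' : n \in N''.
    rewrite /N'' memv_cap (subvP NE1') // andbT.
    have -> : n = p - c by rewrite pcn addrC addKr.
    by apply: memvB; [exact: (subvP NE2) | exact: (subvP CE)].
  by rewrite pcn memvD // (subvP NC).
pose M'' := ((M :&: M') + N'')%VS.
have hMM : forall a, a \in M -> a \in M' -> a \in M''.
  by move=> a aM aM'; apply: (subvP (addvSl _ _)); rewrite memv_cap aM.
have sM := hM; case: sM => sM _ _.
have sM' := hM'; case: sM' => sM' _ _.
have sM'' : is_subalg br M''.
  move=> x y /memv_addP[a /memv_capP[aM aM'] [z zN ->]]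
             /memv_addP[b /memv_capP[bM bM'] [w wN ->]].
  rewrite (brDl hL) !(brDr hL) -!addrA; apply: memvD.
    by apply: hMM; [apply: sM | apply: sM'].
  apply: (subvP (addvSr (M :&: M') N'')).
  apply: memvD; first exact: iN''.
  by apply: memvD; apply: (ideal_l hL _ iN'' zN).
have DE1' : forall x, exists2 m, m \in M'' & exists2 e, e \in E1' & x = m + e.
  move=> x; have [m' m'M [e1 e1E ->]] := D1' x.
  have [m mM [e eE hm']] := D1 m'.
  have [n nN0 [p pN hep]] := ED e eE.
  exists (m' - p).
    apply: hMM; last by rewrite memvB // (subvP NM').
    by rewrite hm' hep addrA addrK memvD // (subvP NM).
  exists (p + e1); first by apply: memvD => //; exact: (subvP NE1').
  by rewrite addrA subrK.
have DE2 : forall x, exists2 m, m \in M'' & exists2 e, e \in E2 & x = m + e.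
  move=> x; have [m mM [e2 e2E ->]] := D2 x.
  have [m' m'M [e eE hm]] := D2' m.
  have [n nN0 [p pN hep]] := ED e eE.
  exists (m - n).
    apply: hMM; first by rewrite memvB // (subvP NM).
    by rewrite hm hep addrA addrAC addrK memvD // (subvP NM').
  exists (n + e2); first by apply: memvD => //; exact: (subvP NE2).
  by rewrite addrA subrK.
have IE1' : forall y, y \in M'' -> y \in E1' -> y \in N''.
  move=> y /memv_addP[a /memv_capP[aM aM'] [z zN ->]] yE.
  apply: memvD => //.
  have aE1' : a \in E1'.
    have -> : a = (a + z) - z by rewrite addrK.
    by apply: memvB => //; exact: (subvP (capvSr E2 E1') _ zN).
  have aN' := I1' a aM' aE1'.
  have aN := I1 a aM (subvP NE2' _ aN').
  by rewrite /N'' memv_cap aE1' (subvP NE2).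
have IE2 : forall y, y \in M'' -> y \in E2 -> y \in N''.
  move=> y /memv_addP[a /memv_capP[aM aM'] [z zN ->]] yE.
  apply: memvD => //.
  have aE2 : a \in E2.
    have -> : a = (a + z) - z by rewrite addrK.
    by apply: memvB => //; exact: (subvP (capvSl E2 E1') _ zN).
  have aN := I2 a aM aE2.
  have aN' := I2' a aM' (subvP NE1 _ aN).
  by rewrite /N'' memv_cap aE2 (subvP NE1').
have CE1' : forall x, (forall a, a \in E1' -> br x a \in N'') -> x \in E2.
  move=> x hx; apply: C12 => a aE.
  have [n nN0 [p pN ->]] := ED a aE.
  rewrite (brDr hL); apply: memvD; first exact: iN.
  have h := hx p (subvP NE1' _ pN).
  by apply: capA; [apply: (iN') | move: h => /memv_capP[]].
have CE2 : forall x, (forall a, a \in E2 -> br x a \in N'') -> x \in E1'.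
  move=> x hx; apply: C21' => a aE.
  have [n nN0 [p pN ->]] := ED a aE.
  rewrite (brDr hL); apply: memvD; last exact: iN'.
  have h := hx n (subvP NE2 _ nN0).
  by apply: capB; [apply: (iN) | move: h => /memv_capP[]].
have na1'' : nonabelian_over br N'' E1'.
  case: na1 => x [y [xE yE nxy]].
  have [n1 n1N [p1 p1N ex]] := ED x xE.
  have [n2 n2N [p2 p2N ey]] := ED y yE.
  exists p1, p2; split; rewrite ?(subvP NE1') //.
  apply/negP => h; move/negP: nxy; apply.
  rewrite ex (brDl hL); apply: memvD; first exact: (ideal_l hL _ iN n1N).
  rewrite ey (brDr hL); apply: memvD; first exact: iN.
  by apply: capA; [apply: (iN') | move: h => /memv_capP[]].
have na2'' : nonabelian_over br N'' E2.
  case: na2' => x [y [xE yE nxy]].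
  have [n1 n1N [p1 p1N ex]] := ED x xE.
  have [n2 n2N [p2 p2N ey]] := ED y yE.
  exists n1, n2; split; rewrite ?(subvP NE2) //.
  apply/negP => h; move/negP: nxy; apply.
  rewrite ey (brDr hL); apply: memvD; last exact: iN'.
  rewrite ex (brDl hL); apply: memvD; last exact: (ideal_l hL _ iN' p1N).
  by apply: capB; [apply: (iN) | move: h => /memv_capP[]].
have capE : (E1' :&: E2)%VS = N'' by rewrite capvC.
right; exists N'', E1', E2; split.
- exact: (build_t3 hL iN'' mo1 mo2 capE sM'' (addvSr _ _) DE1' DE2 IE1' IE2 CE1' CE2 na1'' na2'').
- have s1 : L_iso br N' (N'' :&: N') E1' N''.
    apply: iso_second => //; apply/subvP => x xE.
    by have [p pN [q qN ->]] := E1'D x xE; rewrite addrC memv_add.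
  have s2 : L_iso br N' (N :&: N') E1 N.
    apply: iso_second => //; apply/subvP => x xE.
    by have [n nN0 [p pN ->]] := ED x xE; rewrite memv_add.
  have eq1 : (N'' :&: N')%VS = (N :&: N')%VS.
    apply/vspaceP => y; rewrite !memv_cap; apply/andP/andP => [[h1 h2] | [h1 h2]].
      by split => //; apply: capA => //; case/andP: h1.
    by split => //; rewrite ?memv_cap (subvP NE2) // (subvP NE1').
  rewrite eq1 in s1.
  have iNN : is_ideal br (N :&: N')%VS.
    by move=> x y /memv_capP[h1 h2]; rewrite memv_cap iN ?iN'.
  apply: iso_trans (iso_sym hL iN' iE1' iN'' s1) _.
  exact: iso_trans s2 i1.
- have s1 : L_iso br N (N'' :&: N) E2 N''.
    apply: iso_second => //; apply/subvP => x xE.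
    by have [n nN0 [q qN ->]] := E2D x xE; rewrite addrC memv_add.
  have s2 : L_iso br N (N' :&: N) E1 N'.
    apply: iso_second => //; apply/subvP => x xE.
    by have [n nN0 [p pN ->]] := ED x xE; rewrite addrC memv_add.
  have eq1 : (N'' :&: N)%VS = (N' :&: N)%VS.
    apply/vspaceP => y; rewrite !memv_cap; apply/andP/andP => [[h1 h2] | [h1 h2]].
      by split => //; apply: capB => //; case/andP: h1.
    by split => //; rewrite ?memv_cap (subvP NE2) // (subvP NE1').
  rewrite eq1 in s1.
  have iNN : is_ideal br (N' :&: N)%VS.
    by move=> x y /memv_capP[h1 h2]; rewrite memv_cap iN ?iN'.
  apply: iso_trans (iso_sym hL iN iE2 iN'' s1) _.
  exact: iso_trans s2 i2'.
Qed.

Close Scope ring_scope.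
Unset Implicit Arguments. Set Strict Implicit.


Theorem theorem2p5 (F : fieldType) (L : vectType F) (br : L -> L -> L)
  (hL : lie_bracket br) :
  [/\ (forall A B, chief_factor br A B -> L_connected br A B A B),
      (forall A1 B1 A2 B2, chief_factor br A1 B1 -> chief_factor br A2 B2 ->
         L_connected br A1 B1 A2 B2 -> L_connected br A2 B2 A1 B1) &
      (forall A1 B1 A2 B2 A3 B3, chief_factor br A1 B1 ->
         chief_factor br A2 B2 -> chief_factor br A3 B3 ->
         L_connected br A1 B1 A2 B2 -> L_connected br A2 B2 A3 B3 ->
         L_connected br A1 B1 A3 B3)].
Proof.
split.
- by move=> A B _; left; apply: iso_refl.
- move=> A1 B1 A2 B2 [iA1 iB1 _ _ _] [iA2 iB2 _ _ _].
  case=> [h | [N [E1 [E2 [[[iN hM E12 [m1 m2] only] [na1 na2]] i1 i2]]]]].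
    by left; apply: (iso_sym hL iA1 iA2 iB2 h).
  right; exists N, E2, E1; split => //; split; split => //.
    by rewrite eq_sym.
  by move=> E hE; case: (only E hE); [right | left].
- move=> A1 B1 A2 B2 A3 B3 [iA1 iB1 _ _ _] [iA2 iB2 _ _ _] [iA3 iB3 _ _ _].
  case=> [h12 | [N [E1 [E2 [t i1 i2]]]]]; case=> [h23 | [N' [E1' [E2' [t' i1' i2']]]]].
  + by left; apply: iso_trans h12 h23.
  + right; exists N', E1', E2'; split => //.
    by apply: iso_trans i1' (iso_sym hL iA1 iA2 iB2 h12).
  + right; exists N, E1, E2; split => //.
    by apply: iso_trans i2 h23.
  + exact: (case4 hL iA1 iB1 iA2 iB2 t i1 i2 t' i1' i2').
Qed.
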